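(* For every $v\in\mathcal{K}\setminus\mathcal{Y}_{\mu_1}$ and every $w\in C_v^+\cap\mathcal{K}$ with $w\neq v$, we have $\nabla f_0(w)\cdot(w-v)>0$.
   Context: $\mathcal{K}\subset\mathbb{R}^q$ is an open, bounded, convex set with $0\in\mathcal{K}$. $f:\mathcal{K}\to\mathbb{R}$ is $C^2$ with $D^2f\ge -MI_q$ ($M\ge0$) and $f(v)\to\infty$ as $v\to\partial\mathcal{K}$, $v\in\mathcal{K}$; set $f_0(v)=f(v)+\frac M2|v|^2$, a convex $C^2$ function on $\mathcal{K}$ tending to $\infty$ at $\partial\mathcal{K}$. Let $g:\mathbb{S}^{q-1}\to(0,\infty)$ be the Lipschitz function such that $\nu\mapsto g(\nu)\nu$ parametrizes $\partial\mathcal{K}$, and $m_2=\sup g$. Define $G(x)=g(x/|x|)x$ for $x\ne0$, $G(0)=0$, on $\overline{B_1(0)}$, and $\mathcal{Y}_\mu=G(B_\mu(0))$ for $0<\mu<1$. Fix $r_0>0$ and $0<\mu_0<1$ with $\overline{B_{r_0}(0)}\subset\mathcal{Y}_{\mu_0}$. Let $s_0=\max\{f_0(v):v\in\partial B_{r_0}(0)\}$ and fix $\mu_1\in(\mu_0,1)$ such that $f_0(v)\ge 1+s_0$ for all $v\in\mathcal{K}\setminus\mathcal{Y}_{\mu_1}$. Cones: for $v\in\mathcal{K}\setminus\overline{B_{r_0}(0)}$, $C_v^-$ is the closed (solid) half-cone with vertex $v$, axis the ray from $v$ through $0$, and half-aperture $\alpha(v)\in(0,\pi/2)$ with $\sin\alpha(v)=r_0/|v|$;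 $C_v^+=\{v+\xi:\ v-\xi\in C_v^-\}$ is its reflection through $v$. *)

(* Defs.v *)
From HB Require Import structures.
From mathcomp Require Import all_boot all_order all_algebra.
From mathcomp Require Import all_classical all_reals all_analysis.
Set Implicit Arguments. Unset Strict Implicit. Unset Printing Implicit Defensive.
Import Order.TTheory GRing.Theory Num.Theory.
Import numFieldNormedType.Exports.
Local Open Scope classical_set_scope.
Local Open Scope ring_scope.

Section Defs.
Variables (R : realType) (q : nat).
Notation V := 'rV[R]_q.

Definition dotp (u v : V) : R := \sum_(i < q) u 0 i * v 0 i.
Definition enorm (u : V) : R := Num.sqrt (dotp u u).

Definition evec (i : 'I_q) : V := delta_mx 0 i.

Definition partial (i : 'I_q) (h : V -> R) : V -> R :=
  fun x => derive h x (evec i).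

Definition grad_dot (h : V -> R) (x u : V) : R :=
  \sum_(i < q) partial i h x * u 0 i.

Definition C2_on (U : set V) (h : V -> R) : Prop :=
  forall x, U x ->
    [/\ {for x, continuous h},
        forall i, derivable h x (evec i) /\ {for x, continuous (partial i h)}
      & forall i j, derivable (partial i h) x (evec j) /\
                    {for x, continuous (partial j (partial i h))}].

(* D^2 h >= - M I on U (Hessian bound) *)
Definition hessian_ge (U : set V) (h : V -> R) (M : R) : Prop :=
  forall x, U x -> forall xi : V,
    \sum_(i < q) \sum_(j < q) xi 0 i * xi 0 j * partial j (partial i h) x
      >= - M * (enorm xi) ^+ 2.

Definition is_convex_set (U : set V) : Prop :=
  forall x y, U x -> U y -> forall t : R, 0 <= t <= 1 ->
    U ((1 - t) *: x + t *: y).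

Definition ebounded (U : set V) : Prop :=
  exists r : R, forall x, U x -> enorm x <= r.

Definition blows_up_at_boundary (U : set V) (h : V -> R) : Prop :=
  forall A : R, exists2 d : R, 0 < d &
    forall v, U v -> (exists b, ~ U b /\ enorm (v - b) < d) -> A < h v.

Definition sphere1 : set V := [set nu | enorm nu = 1].

Definition Gmap (g : V -> R) (x : V) : V :=
  if x == 0 then 0 else g ((enorm x)^-1 *: x) *: x.

Definition Yset (g : V -> R) (mu : R) : set V :=
  Gmap g @` [set x | enorm x < mu].

Definition alpha (r0 : R) (v : V) : R := asin (r0 / enorm v).

(* closed solid half-cone with vertex v, axis the ray from v through 0,
   half-aperture alpha(v): the points v + xi with angle(xi, -v) <= alpha(v) *)
Definition cone_minus (r0 : R) (v : V) : set V :=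
  [set x | enorm (x - v) * enorm v * cos (alpha r0 v) <= dotp (x - v) (- v)].

(* its reflection through v *)
Definition cone_plus (r0 : R) (v : V) : set V :=
  [set v + xi | xi in [set xi | cone_minus r0 v (v - xi)]].

End Defs.

(* Main.v *)
Require Import Defs.
From HB Require Import structures.
From mathcomp Require Import all_boot all_order all_algebra.
From mathcomp Require Import all_classical all_reals all_analysis.
From mathcomp Require Import ring lra.
Import Order.TTheory GRing.Theory Num.Theory.
Import numFieldNormedType.Exports.
Local Open Scope classical_set_scope.
Local Open Scope ring_scope.

Module Aux.
Set Implicit Arguments. Unset Strict Implicit. Unset Printing Implicit Defensive.

Section SA.
Variables (R : realType) (q : nat).
Local Notation V := 'rV[R]_q.
Implicit Types (u v w : V).

Lemma dotpC u v : dotp u v = dotp v u.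
Proof. by apply: eq_bigr => i _; rewrite mulrC. Qed.
Lemma dotpDl u v w : dotp (u + v) w = dotp u w + dotp v w.
Proof. by rewrite /dotp -big_split; apply: eq_bigr => i _; rewrite mxE mulrDl. Qed.
Lemma dotpZl (c : R) u v : dotp (c *: u) v = c * dotp u v.
Proof. by rewrite /dotp mulr_sumr; apply: eq_bigr => i _; rewrite mxE mulrA. Qed.
Lemma dotpNl u v : dotp (- u) v = - dotp u v.
Proof. by rewrite -scaleN1r dotpZl mulN1r. Qed.
Lemma dotpBl u v w : dotp (u - v) w = dotp u w - dotp v w.
Proof. by rewrite dotpDl dotpNl. Qed.
Lemma dotpDr u v w : dotp w (u + v) = dotp w u + dotp w v.
Proof. by rewrite !(dotpC w) dotpDl. Qed.
Lemma dotpZr (c : R) u v : dotp v (c *: u) = c * dotp v u.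
Proof. by rewrite !(dotpC v) dotpZl. Qed.
Lemma dotpNr u v : dotp v (- u) = - dotp v u.
Proof. by rewrite !(dotpC v) dotpNl. Qed.
Lemma dotpBr u v w : dotp w (u - v) = dotp w u - dotp w v.
Proof. by rewrite dotpDr dotpNr. Qed.
Lemma dotp_ge0 u : 0 <= dotp u u.
Proof. by apply: sumr_ge0 => i _; rewrite -expr2 sqr_ge0. Qed.
Lemma enorm_ge0 u : 0 <= enorm u.
Proof. exact: sqrtr_ge0. Qed.
Lemma enorm_sqr u : enorm u ^+ 2 = dotp u u.
Proof. by rewrite /enorm sqr_sqrtr // dotp_ge0. Qed.
Lemma enormZ (c : R) u : enorm (c *: u) = `|c| * enorm u.
Proof. by rewrite /enorm dotpZl dotpZr mulrA -expr2 sqrtrM ?sqr_ge0 // sqrtr_sqr. Qed.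
Lemma enormN u : enorm (- u) = enorm u.
Proof. by rewrite -scaleN1r enormZ normrN normr1 mul1r. Qed.
Lemma dotp_evec u (i : 'I_q) : dotp u (evec R i) = u 0 i.
Proof.
rewrite /dotp (bigD1 i) //= big1 ?addr0; first by rewrite /evec mxE !eqxx mulr1.
by move=> j /negbTE ji; rewrite /evec mxE ji andbF mulr0.
Qed.
Lemma entry_le_norm u (i : 'I_q) : `|u 0 i| <= `|u|.
Proof.
rewrite [X in _ <= X]/Num.norm /= mx_normrE.
by rewrite (bigD1 (0, i)) //= (ord1 0) le_max lexx.
Qed.
Lemma norm_le_entries u (c : R) : 0 <= c -> (forall i, `|u 0 i| <= c) -> `|u| <= c.
Proof.
move=> c0 H; rewrite [X in X <= _]/Num.norm /= mx_normrE.
apply: bigmax_le => // -[a b] _ /=; by rewrite (ord1 a) H.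
Qed.
End SA.


Section SB.
Variables (R : realType) (q : nat).
Local Notation V := 'rV[R]_q.

Lemma line_quot (h : V -> R) (z u : V) (s : R) :
  (fun t : R => t^-1 *: (((fun r : R => h (z + r *: u)) \o shift s) (t *: 1)
      - h (z + s *: u))) =
  (fun t : R => t^-1 *: ((h \o shift (z + s *: u)) (t *: u) - h (z + s *: u))).
Proof.
apply/funext => t /=; congr (_ *: (h _ - _)).
by rewrite scaler1 scalerDl addrCA addrA.
Qed.

Lemma derivable_lineP (h : V -> R) (z u : V) (s : R) :
  derivable (fun r : R => h (z + r *: u)) s 1 <-> derivable h (z + s *: u) u.
Proof. by rewrite /derivable line_quot. Qed.

Lemma derive_line (h : V -> R) (z u : V) (s : R) :
  derive (fun r : R => h (z + r *: u)) s 1 = derive h (z + s *: u) u.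
Proof. by rewrite /derive line_quot. Qed.

Lemma is_derive_line (h : V -> R) (z u : V) (s : R) :
  derivable h (z + s *: u) u ->
  is_derive s 1 (fun r : R => h (z + r *: u)) (derive h (z + s *: u) u).
Proof.
move=> d; apply: DeriveDef; first by apply/derivable_lineP.
exact: derive_line.
Qed.

Lemma is_derive_line_shift (h : V -> R) (z u : V) (s D : R) :
  is_derive (0:R) 1 (fun r : R => h ((z + s *: u) + r *: u)) D ->
  is_derive s 1 (fun r : R => h (z + r *: u)) D.
Proof.
move=> [d1 d2]; move/derivable_lineP: d1; rewrite scale0r addr0 => d1.
move: d2; rewrite derive_line scale0r addr0 => d2.
by rewrite -d2; apply: is_derive_line.
Qed.

Lemma MVT2 (f df : R -> R) (a b : R) :
  (forall x, Num.min a b <= x <= Num.max a b -> is_derive x 1 f (df x)) ->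
  exists2 c, Num.min a b <= c <= Num.max a b & f b - f a = df c * (b - a).
Proof.
move=> H.
have K1 : forall a b : R, a <= b -> (forall x : R, a <= x <= b -> is_derive x 1 f (df x)) ->
  exists2 c, a <= c <= b & f b - f a = df c * (b - a).
  move=> a' b' ab H'.
  have [] := @MVT_segment R f df a' b' ab.
  - move=> x; rewrite in_itv /= => /andP[ax xb]; apply: H'.
    by rewrite !ltW.
  - apply: derivable_within_continuous => x; rewrite in_itv /= => /andP[ax xb].
    by have [] := H' x; rewrite ?ax ?xb.
  by move=> c; rewrite in_itv /= => cab E; exists c.
have [ab|ba] := leP a b.
  apply: K1 => // x xab; apply: H; by rewrite (min_idPl ab) (max_idPr ab).
have ab : b <= a by rewrite ltW.
have [c cab E] : exists2 c, b <= c <= a & f a - f b = df c * (a - b).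
  apply: K1 => // x xab; apply: H; by rewrite (min_idPr ab) (max_idPl ab).
by exists c => //; rewrite -opprB E -mulrN opprB.
Qed.
End SB.


Section SC.
Variables (R : realType) (q : nat).
Local Notation V := 'rV[R]_q.

Lemma ballV (x y : V) (e : R) : ball x e y <-> `|x - y| < e.
Proof. by rewrite -ball_normE. Qed.

Lemma ballR (x y : R) (e : R) : ball x e y <-> `|x - y| < e.
Proof. by rewrite -ball_normE. Qed.

Lemma entry_le_sum (d : V) (j : 'I_q) : `|d 0 j| <= \sum_i `|d 0 i|.
Proof.
by rewrite (bigD1 j) //= lerDl sumr_ge0.
Qed.

Lemma minmax_abs (b c : R) : Num.min 0 b <= c <= Num.max 0 b -> `|c| <= `|b|.
Proof.
have [b0|b0] := leP 0 b.
  move=> /andP[c0 cb].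
  by rewrite !ger0_norm // (le_trans c0).
have b0' : b <= 0 by rewrite ltW.
move=> /andP[c0 cb].
by rewrite !ler0_norm // lerN2.
Qed.

Definition Zpt (x d : V) (t : R) (n : nat) : V :=
  x + t *: \row_j (if (j < n)%N then d 0 j else 0).

Lemma Zpt0 (x d : V) t : Zpt x d t 0 = x.
Proof.
rewrite /Zpt; have -> : \row_j (if (j < 0)%N then d 0 j else 0) = 0 :> V.
  by apply/rowP => j; rewrite !mxE.
by rewrite scaler0 addr0.
Qed.

Lemma Zptq (x d : V) t : Zpt x d t q = x + t *: d.
Proof.
rewrite /Zpt; congr (_ + _ *: _); apply/rowP => j; by rewrite !mxE ltn_ord.
Qed.

Lemma ZptS (x d : V) t (k : 'I_q) : Zpt x d t k.+1 = Zpt x d t k + (t * d 0 k) *: evec R k.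
Proof.
rewrite /Zpt -addrA; congr (_ + _); rewrite -scalerA -scalerDr; congr (_ *: _).
apply/rowP => j; rewrite !mxE ltnS leq_eqVlt.
have [->|jk] := eqVneq j k; first by rewrite eqxx ltnn /= add0r mulr1.
rewrite (_ : (j == k :> nat) = false) /= ?mulr0 ?addr0 //.
by apply/negbTE; apply: contra jk => /eqP jk; apply/eqP/val_inj.
Qed.

Lemma Zpt_dist (x d : V) t (k : 'I_q) (c : R) : `|c| <= `|t * d 0 k| ->
  `|x - (Zpt x d t k + c *: evec R k)| <= `|t| * \sum_i `|d 0 i|.
Proof.
move=> ck; rewrite opprD addrA /Zpt opprD addrA subrr add0r.
apply: norm_le_entries; first by rewrite mulr_ge0 // sumr_ge0.
move=> j; rewrite !mxE.
have [->|jk] := eqVneq j k.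
  rewrite ltnn eqxx /= mulr0 oppr0 add0r mulr1 normrN.
  by rewrite (le_trans ck) // normrM ler_wpM2l // entry_le_sum.
rewrite andbF mulr0 subr0 normrN normrM ler_wpM2l //.
by case: ifP => _; rewrite ?normr0 ?sumr_ge0 ?entry_le_sum.
Qed.

End SC.


Section SD.
Variables (R : realType) (q : nat).
Local Notation V := 'rV[R]_q.

Lemma line_deriv0 (h : V -> R) (U : set V) (x d : V) :
  open U -> U x ->
  (forall y, U y -> forall i, derivable h y (evec R i)) ->
  (forall i, {for x, continuous (partial i h)}) ->
  is_derive (0:R) 1 (fun t : R => h (x + t *: d)) (grad_dot h x d).
Proof.
move=> Uo Ux hd hc.
set G := grad_dot h x d.
set S := \sum_i `|d 0 i|.
have S0 : 0 <= S by rewrite sumr_ge0.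
have S1 : 0 < 1 + S by rewrite ltr_wpDr.
have cv : (fun t : R => t^-1 *: (((fun r : R => h (x + r *: d)) \o shift 0) (t *: 1)
     - h (x + 0 *: d))) @ 0^' --> G.
  apply/cvgrPdist_le => eps eps0.
  pose e1 := eps / (1 + S).
  have e10 : 0 < e1 by rewrite divr_gt0.
  have H1 : \forall z \near x, U z by apply: open_nbhs_nbhs; split.
  have H2 : \forall z \near x, forall i, `|partial i h x - partial i h z| < e1.
    eapply (@filter_forall V _ (fun i z => `|partial i h x - partial i h z| < e1) (nbhs x)); first exact: nbhs_filter. move=> i.
    by have := hc i; move/cvgrPdist_lt => /(_ e1 e10).
  have := @filterS2 _ (nbhs x) _ _ _ (fun z => U z /\ forall i, `|partial i h x - partial i h z| < e1) (fun z a b => conj a b) H1 H2.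
  move=> /(_ (nbhs_filter x)) /(nbhs_ballP _ _) [δ δ0 Hδ].
  rewrite near_withinE; apply/nbhs_ballP.
  have δp : 0 < δ by exact: δ0.
  exists (δ / (1 + S)); first by rewrite /= divr_gt0.
  move=> t /ballR; rewrite sub0r normrN => tδ /= t0.
  have tS : `|t| * S < δ.
    apply: le_lt_trans (_ : `|t| * (1 + S) < δ).
      by rewrite ler_wpM2l // lerDr.
    by rewrite -ltr_pdivlMr.
  have Hk : forall k : 'I_q,
      `|partial k h x * d 0 k - t^-1 * (h (Zpt x d t k.+1) - h (Zpt x d t k))|
        <= e1 * `|d 0 k|.
    move=> k.
    have inball : forall c, `|c| <= `|t * d 0 k| ->
        ball x δ (Zpt x d t k + c *: evec R k).
      move=> c ck; apply/ballV; exact: le_lt_trans (Zpt_dist x ck) tS.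
    have [c cb E] := @MVT2 R (fun τ => h (Zpt x d t k + τ *: evec R k))
      (fun τ => partial k h (Zpt x d t k + τ *: evec R k)) 0 (t * d 0 k)
      (fun τ Hτ => is_derive_line
         (hd _ (Hδ _ (inball _ (minmax_abs Hτ))).1 k)).
    rewrite ZptS; move: E; rewrite scale0r addr0 subr0 => ->.
    rewrite mulrCA mulKf // -mulrBl normrM ler_wpM2r //.
    exact/ltW/((Hδ _ (inball _ (minmax_abs cb))).2 k).
  have Esum : G - t^-1 *: (((fun r : R => h (x + r *: d)) \o shift 0) t%:A
      - h (x + 0 *: d)) = \sum_(k < q)
      (partial k h x * d 0 k - t^-1 * (h (Zpt x d t k.+1) - h (Zpt x d t k))).
    rewrite sumrB -mulr_sumr.
    have -> : \sum_(k < q) (h (Zpt x d t k.+1) - h (Zpt x d t k)) =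
        h (Zpt x d t q) - h (Zpt x d t 0).
      by rewrite -(big_mkord xpredT (fun k => h (Zpt x d t k.+1) - h (Zpt x d t k)))
         telescope_sumr.
    by rewrite Zptq Zpt0 /= addr0 scale0r addr0 [t%:A]mulr1.
  rewrite Esum; apply: le_trans (ler_norm_sum _ _ _) _.
  apply: le_trans (ler_sum _ (fun k _ => Hk k)) _.
  rewrite -mulr_sumr -/S /e1 mulrAC ler_pdivrMr // ler_pM2l // lerDr //.
apply: DeriveDef; first by apply/cvg_ex; exists G.
rewrite /derive; exact: cvg_lim cv.
Qed.

End SD.


Section SE.
Variables (R : realType) (q : nat).
Local Notation V := 'rV[R]_q.

Lemma is_derive_quad (a b c s : R) :
  is_derive s 1 (fun t : R => a + t * b + t ^+ 2 * c) (b + 2 * s * c).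
Proof.
pose p : {poly R} := a%:P + b *: 'X + c *: 'X^2.
have -> : (fun t : R => a + t * b + t ^+ 2 * c) = horner p.
  apply/funext => t; rewrite /p !hornerD hornerC !hornerZ hornerX hornerXn; ring.
apply: (is_derive_eq (is_derive_poly p s)). rewrite /p !derivD derivC !derivZ derivX derivXn add0r hornerD !hornerZ hornerMn hornerX hornerC /= ?expr1 ?horner1 ?hornerX. rewrite -mulr_natl; ring.
Qed.

Lemma line_deriv (h : V -> R) (U : set V) (x d : V) (s : R) :
  open U -> U (x + s *: d) ->
  (forall y, U y -> forall i, derivable h y (evec R i)) ->
  (forall i, {for x + s *: d, continuous (partial i h)}) ->
  is_derive s 1 (fun t : R => h (x + t *: d)) (grad_dot h (x + s *: d) d).
Proof.
move=> Uo Us hd hc; apply: is_derive_line_shift; exact: (line_deriv0 d Uo Us hd hc).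
Qed.

Lemma quad_line (M : R) (z u : V) (s : R) :
  is_derive s 1 (fun t : R => M / 2 * enorm (z + t *: u) ^+ 2)
    (M * (dotp z u + s * dotp u u)).
Proof.
have -> : (fun t : R => M / 2 * enorm (z + t *: u) ^+ 2) =
  (M / 2) \*: (fun t : R => dotp z z + t * (2 * dotp z u) + t ^+ 2 * dotp u u).
  rewrite funeqE => t /=; rewrite enorm_sqr !(dotpDl, dotpDr, dotpZl, dotpZr).
  rewrite (dotpC u z); congr (_ * _); ring.
apply: is_derive_eq; rewrite /GRing.scale /=; field.
by [].
Qed.

Lemma derive_from_line (h : V -> R) (z u : V) (D : R) :
  is_derive (0:R) 1 (fun r : R => h (z + r *: u)) D ->
  derivable h z u /\ derive h z u = D.
Proof.
move=> [d1 d2]; move/derivable_lineP: d1; rewrite scale0r addr0 => d1.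
by split => //; move: d2; rewrite derive_line scale0r addr0.
Qed.
End SE.


Section SF.
Variables (R : realType) (q : nat).
Local Notation V := 'rV[R]_q.
Variables (K : set V) (f : V -> R) (M : R).
Hypothesis Ko : open K.
Hypothesis Kf : C2_on K f.

Lemma Lf_line (w e : V) (s : R) : K (w + s *: e) ->
  is_derive s 1 (fun t => f (w + t *: e)) (grad_dot f (w + s *: e) e).
Proof.
move=> Ks; apply: (line_deriv Ko Ks).
  by move=> y Ky i; have [_ H _] := Kf Ky; exact: (H i).1.
by move=> i; have [_ H _] := Kf Ks; exact: (H i).2.
Qed.

Lemma phi_deriv (w e : V) (s : R) : K (w + s *: e) ->
  is_derive s 1 (fun t => f (w + t *: e) + M / 2 * enorm (w + t *: e) ^+ 2)
    (grad_dot f (w + s *: e) e + M * (dotp w e + s * dotp e e)).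
Proof.
move=> Ks.
have -> : (fun t => f (w + t *: e) + M / 2 * enorm (w + t *: e) ^+ 2) =
  (fun t => f (w + t *: e)) + (fun t => M / 2 * enorm (w + t *: e) ^+ 2) by [].
apply: is_deriveD; [exact: Lf_line | exact: quad_line].
Qed.

Lemma grad_f0 (z u : V) : K z ->
  grad_dot (fun v => f v + M / 2 * enorm v ^+ 2) z u =
  grad_dot f z u + M * dotp z u.
Proof.
move=> Kz.
have P : forall i, partial i (fun v => f v + M / 2 * enorm v ^+ 2) z =
    partial i f z + M * z 0 i.
  move=> i; rewrite /partial.
  have Kz0 : K (z + 0 *: evec R i) by rewrite scale0r addr0.
  have := phi_deriv Kz0; rewrite scale0r addr0 mul0r addr0.
  move=> H; have [_ ->] := derive_from_line (h := fun v => f v + M / 2 * enorm v ^+ 2) H.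
  rewrite dotp_evec; congr (_ + _).
  rewrite /grad_dot (bigD1 i) //= big1 ?addr0.
    by rewrite /evec mxE !eqxx mulr1.
  by move=> j /negbTE ji; rewrite /evec mxE ji andbF mulr0.
rewrite /grad_dot (eq_bigr _ (fun i _ => congr1 (fun a => a * u 0 i) (P i))).
rewrite /dotp mulr_sumr -big_split /=; apply: eq_bigr => i _; ring.
Qed.

Lemma phi2_deriv (w e : V) (s : R) : K (w + s *: e) ->
  is_derive s 1 (fun t => grad_dot f (w + t *: e) e + M * (dotp w e + t * dotp e e))
    (\sum_i grad_dot (partial i f) (w + s *: e) e * e 0 i + M * dotp e e).
Proof.
move=> Ks.
have H1 : is_derive s 1 (\sum_i (fun t => partial i f (w + t *: e) * e 0 i))
    (\sum_i grad_dot (partial i f) (w + s *: e) e * e 0 i).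
  apply: is_derive_sum => i.
  have H : is_derive s 1 (fun t => partial i f (w + t *: e))
      (grad_dot (partial i f) (w + s *: e) e).
    apply: (line_deriv Ko Ks).
      by move=> y Ky j; have [_ _ H] := Kf Ky; exact: (H i j).1.
    by move=> j; have [_ _ H] := Kf Ks; exact: (H i j).2.
  have := is_deriveZ (e 0 i) H.
  have -> : (e 0 i) \*: (fun t => partial i f (w + t *: e)) =
    (fun t => partial i f (w + t *: e) * e 0 i).
    by apply/funext => t /=; rewrite mulrC.
  by rewrite /GRing.scale /= mulrC.
have H2 := is_derive_quad (M * dotp w e) (M * dotp e e) 0 s.
have := is_deriveD H1 H2.
have -> : (\sum_i (fun t => partial i f (w + t *: e) * e 0 i)) +
  (fun t => M * dotp w e + t * (M * dotp e e) + t ^+ 2 * 0) =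
  (fun t => grad_dot f (w + t *: e) e + M * (dotp w e + t * dotp e e)).
  apply/funext => t; rewrite addrfctE fct_sumE /grad_dot /=; ring.
by rewrite mulr0 addr0.
Qed.

End SF.


Section SG.
Variables (R : realType) (q : nat).
Local Notation V := 'rV[R]_q.
Variables (K : set V) (f : V -> R) (M : R).
Hypothesis Ko : open K.
Hypothesis Kf : C2_on K f.
Hypothesis Kh : hessian_ge K f M.

Lemma key (w e : V) (T : R) : 1 < T ->
  (forall s, 0 <= s <= T -> K (w + s *: e)) ->
  f (w + T *: e) + M / 2 * enorm (w + T *: e) ^+ 2 <
    f (w + e) + M / 2 * enorm (w + e) ^+ 2 ->
  grad_dot (fun v => f v + M / 2 * enorm v ^+ 2) w e < 0.
Proof.
move=> T1 Kseg lt.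
pose phi := fun t : R => f (w + t *: e) + M / 2 * enorm (w + t *: e) ^+ 2.
pose P := fun t : R => grad_dot f (w + t *: e) e + M * (dotp w e + t * dotp e e).
have T0 : 0 < T by apply: lt_trans T1.
have [c cb E] : exists2 c, Num.min 1 T <= c <= Num.max 1 T &
    phi T - phi 1 = P c * (T - 1).
  apply: MVT2 => x; rewrite (min_idPl (ltW T1)) (max_idPr (ltW T1)).
  move=> /andP[x1 xT]; apply: (phi_deriv _ Ko Kf); apply: Kseg.
  by rewrite xT (le_trans _ x1).
move: cb; rewrite (min_idPl (ltW T1)) (max_idPr (ltW T1)) => /andP[c1 cT].
have Pc : P c < 0.
  have : phi T - phi 1 < 0 by rewrite subr_lt0 /phi scale1r.
  by rewrite E pmulr_llt0 // subr_gt0.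
have c0 : 0 <= c by apply: le_trans c1.
have hd : forall x, 0 <= x <= c -> is_derive x 1 P
    (\sum_i grad_dot (partial i f) (w + x *: e) e * e 0 i + M * dotp e e).
  move=> x /andP[x0 xc]; apply: (phi2_deriv _ Ko Kf); apply: Kseg.
  by rewrite x0 (le_trans xc).
have P0c : P 0 <= P c.
  apply: (@ger0_derive1_ndecr R P 0 c) => //.
  - move=> x; rewrite in_itv /= => /andP[x0 xc].
    by have [] := hd x (ltac:(by rewrite !ltW)).
  - move=> x; rewrite in_itv /= => /andP[x0 xc].
    rewrite derive1E; have [_ ->] := hd x (ltac:(by rewrite !ltW)).
    have Kx : K (w + x *: e) by apply: Kseg; rewrite ltW // (le_trans (ltW xc)).
    have := Kh Kx e; rewrite enorm_sqr.
    have -> : \sum_i \sum_j e 0 i * e 0 j * partial j (partial i f) (w + x *: e) =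
      \sum_i grad_dot (partial i f) (w + x *: e) e * e 0 i.
      apply: eq_bigr => i _; rewrite /grad_dot mulr_suml.
      by apply: eq_bigr => j _; ring.
    lra.
  - apply: derivable_within_continuous => x; rewrite in_itv /= => xc.
    by have [] := hd x xc.
have Kw : K w by have := Kseg 0; rewrite scale0r addr0 lexx ltW //; apply.
rewrite (grad_f0 _ Ko Kf) //; move: P0c; rewrite /P scale0r addr0 mul0r addr0.
move=> H; exact: le_lt_trans H Pc.
Qed.
End SG.


Section SH.
Variables (R : realType) (q : nat).
Local Notation V := 'rV[R]_q.

Lemma enorm_eq0 (y : V) : enorm y = 0 -> y = 0.
Proof.
move=> /eqP; rewrite sqrtr_eq0 => H.
have H0 : dotp y y = 0 by apply/eqP; rewrite eq_le H dotp_ge0.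
apply/rowP => i; rewrite mxE.
have G : forall j, xpredT j -> 0 <= y 0 j * y 0 j.
  by move=> j _; rewrite -expr2 sqr_ge0.
have E := @psumr_eq0P _ _ xpredT (fun i => y 0 i * y 0 i) G H0 i isT.
by move/eqP: E; rewrite mulf_eq0 orbb => /eqP.
Qed.

Lemma closure_scale (K : set V) (b : V) (t : R) :
  open K -> is_convex_set K -> K 0 -> closure K b -> 0 <= t < 1 -> K (t *: b).
Proof.
move=> Ko Kc K0 Kb /andP[t0 t1].
have [->|tn0] := eqVneq t 0; first by rewrite scale0r.
have tp : 0 < t by rewrite lt_neqAle eq_sym tn0.
have : nbhs (0 : V) K by apply: open_nbhs_nbhs; split.
move=> /nbhs_ballP [rho rho0 Hrho].
have rhop : 0 < rho by exact: rho0.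
have r0 : 0 < rho * (1 - t) / t by rewrite divr_gt0 // mulr_gt0 // subr_gt0.
have [k [Kk /ballV bk]] := Kb _ (@nbhsx_ballx _ _ b _ r0).
pose z := (t / (1 - t)) *: (b - k).
have Kz : K z.
  apply: Hrho; apply/ballV; rewrite sub0r normrN /z normrZ.
  rewrite ger0_norm ?divr_ge0 ?subr_ge0 ?ltW //.
  rewrite -ltr_pdivlMl ?divr_gt0 ?subr_gt0 //.
  by rewrite invf_div mulrC mulrA.
have := Kc _ _ Kz Kk t (ltac:(by rewrite t0 ltW)).
have -> : (1 - t) *: z + t *: k = t *: b; last by [].
rewrite /z scalerA mulrCA divff ?subr_eq0 1?eq_sym ?lt_eqF // mulr1.
by rewrite scalerBr subrK.
Qed.

Lemma Yset_sub (K : set V) (g : V -> R) (mu : R) :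
  open K -> is_convex_set K -> K 0 ->
  closure K `\` K = [set g nu *: nu | nu in sphere1 (q:=q)] -> mu <= 1 ->
  Yset g mu `<=` K.
Proof.
move=> Ko Kc K0 Kb mu1 x [y ymu <-]; rewrite /Gmap.
have [//|y0] := eqVneq y 0.
have ey0 : enorm y != 0 by apply: contra y0 => /eqP /enorm_eq0 ->.
have eyp : 0 < enorm y by rewrite lt_neqAle eq_sym ey0 enorm_ge0.
set nu := (enorm y)^-1 *: y.
have snu : sphere1 nu.
  by rewrite /sphere1 /= /nu enormZ ger0_norm ?invr_ge0 ?enorm_ge0 // mulVf.
have : (closure K `\` K) (g nu *: nu) by rewrite Kb; exists nu.
case=> cl _.
have -> : g nu *: y = enorm y *: (g nu *: nu).
  by rewrite /nu !scalerA; congr (_ *: _); rewrite mulrC mulrA mulVf // mul1r.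
apply: (closure_scale Ko Kc K0 cl); rewrite enorm_ge0 /=.
exact: lt_le_trans ymu mu1.
Qed.

Lemma cone_point (r0 : R) (v w : V) : 0 < r0 -> r0 < enorm v ->
  cone_plus r0 v w -> w <> v ->
  exists2 t1 : R, 0 < t1 & enorm (v + t1 *: (v - w)) = r0.
Proof.
move=> r0p rv [xi Hc Exi] wv.
have xi0 : xi != 0 by apply/eqP => xi0; apply: wv; rewrite -Exi xi0 addr0.
move: Hc; rewrite /cone_minus /= addrAC subrr add0r enormN dotpNl dotpNr opprK.
set a := enorm v.
have ap : 0 < a by apply: lt_trans rv.
have ra1 : r0 / a < 1 by rewrite ltr_pdivrMr // mul1r.
have ra0 : 0 < r0 / a by rewrite divr_gt0.
rewrite /alpha cos_asin; last by rewrite (le_trans _ (ltW ra0)) ?lerN10 // ltW.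
set cs := Num.sqrt _.
have cs0 : 0 <= cs by rewrite sqrtr_ge0.
have cs2 : cs ^+ 2 = 1 - (r0 / a) ^+ 2.
  rewrite sqr_sqrtr // subr_ge0 expr_le1 ?ltW //.
set n' := enorm xi; set p := dotp xi v.
have n'p : 0 < n'.
  rewrite lt_neqAle enorm_ge0 andbT eq_sym; apply: contra xi0.
  by move=> /eqP /enorm_eq0 ->.
set N := dotp xi xi.
have Nn : N = n' ^+ 2 by rewrite enorm_sqr.
have Np : 0 < N by rewrite Nn exprn_gt0.
set A := dotp v v.
have Aa : A = a ^+ 2 by rewrite enorm_sqr.
move=> Hc.
have p0 : 0 <= p by apply: le_trans Hc; rewrite !mulr_ge0 // enorm_ge0.
have ar : a ^+ 2 * (r0 / a) ^+ 2 = r0 ^+ 2.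
  by rewrite -exprMn mulrCA mulfV ?mulr1 // gt_eqF.
have Dnn : N * (A - r0 ^+ 2) <= p ^+ 2.
  have H1 : (n' * a * cs) ^+ 2 <= p ^+ 2.
    by rewrite ler_sqr ?nnegrE // !mulr_ge0 // ltW.
  have H2 : (n' * a * cs) ^+ 2 = N * (A - r0 ^+ 2).
    by rewrite !exprMn cs2 Nn Aa -ar; ring.
  by rewrite -H2.
have Dpos : 0 < N * (A - r0 ^+ 2).
  by rewrite mulr_gt0 // subr_gt0 Aa ltr_pXn2r // nnegrE ltW.
set D := p ^+ 2 - N * (A - r0 ^+ 2).
have D0 : 0 <= D by rewrite subr_ge0.
set s := Num.sqrt D.
have sD : s ^+ 2 = D by rewrite sqr_sqrtr.
have s0 : 0 <= s by rewrite sqrtr_ge0.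
have sp : s < p.
  have pp : 0 < p ^+ 2 by apply: lt_le_trans Dnn.
  rewrite -(ger0_norm p0) -sqrtr_sqr ltr_sqrt // /D.
  by rewrite ltrBlDr ltrDl.
exists ((p - s) / N); first by rewrite divr_gt0 // subr_gt0.
set u := (p - s) / N.
have hu : u * N = p - s by rewrite /u mulfVK // gt_eqF.
have -> : v + u *: (v - w) = v - u *: xi.
  by rewrite -Exi opprD addrA subrr add0r scalerN.
have E : dotp (v - u *: xi) (v - u *: xi) = r0 ^+ 2.
  rewrite !(dotpBl, dotpBr, dotpZl, dotpZr) (dotpC v xi) -/A -/N -/p.
  have Nn0 : N != 0 by rewrite gt_eqF.
  apply: (mulIf Nn0).
  have -> : (A - u * p - (u * p - u * (u * N))) * N = A * N - 2 * p * (u * N) + (u * N) ^+ 2.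
    by ring.
  rewrite hu.
  have -> : A * N - 2 * p * (p - s) + (p - s) ^+ 2 = A * N - p ^+ 2 + s ^+ 2 by ring.
  rewrite sD /D; ring.
by rewrite /enorm E sqrtr_sqr ger0_norm // ltW.
Qed.

End SH.

End Aux.
Import Aux.
Unset Implicit Arguments.

Lemma grad_dotN (R : realType) (q : nat) (h : 'rV[R]_q -> R) x u :
  grad_dot h x (- u) = - grad_dot h x u.
Proof.
by rewrite /grad_dot -sumrN; apply: eq_bigr => i _; rewrite mxE mulrN.
Qed.

Theorem lemma2p4 (R : realType) (q : nat) (K : set 'rV[R]_q)
  (f : 'rV[R]_q -> R) (M : R) (g : 'rV[R]_q -> R)
  (r0 mu0 mu1 s0 : R) :
  open K -> ebounded K -> is_convex_set K -> K 0 ->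
  C2_on K f -> 0 <= M -> hessian_ge K f M ->
  blows_up_at_boundary K f ->
  let f0 := fun v => f v + M / 2 * (enorm v) ^+ 2 in
  (forall nu, sphere1 nu -> 0 < g nu) ->
  (exists L : R, forall nu1 nu2, sphere1 nu1 -> sphere1 nu2 ->
      `|g nu1 - g nu2| <= L * enorm (nu1 - nu2)) ->
  closure K `\` K = [set g nu *: nu | nu in sphere1 (q:=q)] ->
  0 < r0 -> 0 < mu0 < 1 ->
  [set x | enorm x <= r0] `<=` Yset g mu0 ->
  (exists2 v, enorm v = r0 & f0 v = s0) ->
  (forall v, enorm v = r0 -> f0 v <= s0) ->
  mu0 < mu1 < 1 ->
  (forall v, K v -> ~ Yset g mu1 v -> 1 + s0 <= f0 v) ->
  forall v, K v -> ~ Yset g mu1 v ->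
  forall w, cone_plus r0 v w -> K w -> w <> v ->
  0 < grad_dot f0 w (w - v).
Proof.
move=> Ko _ Kc K0 Kf _ Kh _ f0 _ _ Kbd r0p /andP[mu00 mu01] bsub _ f0le
  /andP[mu01' mu11] Hout v Kv vout w wcone Kw wv.
have Ysub := Yset_sub Ko Kc K0 Kbd (ltW mu01).
have rv : r0 < enorm v.
  rewrite ltNge; apply/negP => vr; apply: vout.
  have [y ymu Gy] := bsub v vr.
  by exists y => //; apply: lt_trans ymu mu01'.
have [t1 t1p Eu] := cone_point r0p rv wcone wv.
set e := v - w.
set u := v + t1 *: e.
have Ku : K u by apply: Ysub; apply: bsub; rewrite /= Eu.
set T := 1 + t1.
have T1 : 1 < T by rewrite /T ltrDl.
have T0 : 0 < T by apply: lt_trans T1.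
have wTe : w + T *: e = u.
  by rewrite /u /T scalerDl scale1r addrA /e addrCA subrr addr0.
have Kseg : forall s, 0 <= s <= T -> K (w + s *: e).
  move=> s /andP[s0' sT].
  have st : 0 <= s / T <= 1.
    by rewrite divr_ge0 ?(ltW T0) //= ler_pdivrMr // mul1r.
  have := Kc w u Kw Ku (s / T) st.
  congr K; rewrite -wTe scalerDr scalerA mulfVK ?gt_eqF //.
  by rewrite addrA -scalerDl subrK scale1r.
have lt : f0 (w + T *: e) < f0 (w + e).
  rewrite wTe (_ : w + e = v); last by rewrite /e addrC subrK.
  apply: le_lt_trans (f0le _ Eu) _.
  by apply: lt_le_trans (Hout v Kv vout); rewrite ltrDr.
have := key Ko Kf Kh T1 Kseg lt.
by rewrite -[w - v]opprB grad_dotN oppr_gt0.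
Qed.
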